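(* Let $S$ be a numerical semigroup. If $\mathrm{Ap}(S)$ is $\gamma$-rectangular, then $S$ is free. The converse fails: $S=\langle 5,6,9\rangle$ is free but its Apéry set is not $\gamma$-rectangular.
   Context: A numerical semigroup is a submonoid $S$ of $(\mathbb N,+)$ with finite complement in $\mathbb N$; $g_1<\dots<g_\nu$ is its minimal system of generators, $m=g_1$, and for $n\in S$, $\mathrm{Ap}(S,n)=\{s\in S: s-n\notin S\}$, $\mathrm{Ap}(S)=\mathrm{Ap}(S,m)$. A representation of $s\in S$ is an expression $s=\sum_{i=1}^\nu\lambda_ig_i$, $\lambda_i\in\mathbb N$; $\mathrm{ord}(s)$ is the maximum of $\sum\lambda_i$ over all representations; a representation is maximal if $\sum\lambda_i=\mathrm{ord}(s)$. For $i=2,\dots,\nu$, $\gamma_i=\max\{h\in\mathbb N: hg_i\in\mathrm{Ap}(S),\ \mathrm{ord}(hg_i)=h,\ hg_i\text{ has a unique maximal representation}\}$; $\mathrm{Ap}(S)$ is $\gamma$-rectangular if $\mathrm{Ap}(S)=\{\sum_{i=2}^\nu\lambda_ig_i: 0\le\lambda_i\le\gamma_i\}$. For an arbitrary ordering $\mathbf n=(n_1,\dots,n_\nu)$ of the minimal generators, $\phi_i=\min\{h\in\mathbb N: hn_i\in\langle n_1,\dots,n_{i-1}\rangle\}-1$ ($i=2,\dots,\nu$). $S$ is free if there is such an ordering with $\mathrm{Ap}(S,n_1)=\{\sum_{i=2}^\nu\lambda_in_i: 0\le\lambda_i\le\phi_i\}$. *)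

(* Defs.v *)
From mathcomp Require Import all_boot.
Set Implicit Arguments. Unset Strict Implicit. Unset Printing Implicit Defensive.

Definition numerical_semigroup (S : nat -> Prop) : Prop :=
  [/\ S 0, (forall a b, S a -> S b -> S (a + b)) &
      exists F, forall n, F <= n -> S n].

Definition min_generator (S : nat -> Prop) (x : nat) : Prop :=
  [/\ S x, 0 < x & ~ (exists a b, [/\ S a, S b, 0 < a, 0 < b & a + b = x])].

(* g = [g_1 < ... < g_nu] is the minimal system of generators of S
   (0-based: g`_0 = m is the multiplicity). *)
Definition min_gens (S : nat -> Prop) (g : seq nat) : Prop :=
  sorted ltn g /\ forall x, x \in g <-> min_generator S x.

(* Ap(S,n) = {s in S : s - n notin S} (s - n < 0 counts as not in S). *)
Definition apery (S : nat -> Prop) (n s : nat) : Prop :=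
  S s /\ (s < n \/ ~ S (s - n)).

Definition is_rep (g : seq nat) (s : nat) (l : seq nat) : Prop :=
  size l = size g /\ \sum_(i < size g) nth 0 l i * nth 0 g i = s.

Definition is_ord (g : seq nat) (s k : nat) : Prop :=
  (exists l, is_rep g s l /\ sumn l = k) /\
  (forall l, is_rep g s l -> sumn l <= k).

Definition maximal_rep (g : seq nat) (s : nat) (l : seq nat) : Prop :=
  is_rep g s l /\ forall l', is_rep g s l' -> sumn l' <= sumn l.

Definition unique_maximal_rep (g : seq nat) (s : nat) : Prop :=
  exists l, maximal_rep g s l /\ forall l', maximal_rep g s l' -> l' = l.

(* the conditions defining gamma_i (i is a 0-based index, 1 <= i < nu) *)
Definition gamma_cond (S : nat -> Prop) (g : seq nat) (i h : nat) : Prop :=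
  [/\ apery S (nth 0 g 0) (h * nth 0 g i),
      is_ord g (h * nth 0 g i) h &
      unique_maximal_rep g (h * nth 0 g i)].

Definition is_gamma (S : nat -> Prop) (g : seq nat) (i k : nat) : Prop :=
  gamma_cond S g i k /\ forall h, gamma_cond S g i h -> h <= k.

Definition gamma_rectangular (S : nat -> Prop) (g : seq nat) : Prop :=
  exists gam : nat -> nat,
    (forall i, 1 <= i < size g -> is_gamma S g i (gam i)) /\
    forall x, apery S (nth 0 g 0) x <->
      exists lam : nat -> nat,
        (forall i, 1 <= i < size g -> lam i <= gam i) /\
        x = \sum_(1 <= i < size g) lam i * nth 0 g i.

Definition in_monoid (t : seq nat) (x : nat) : Prop :=
  exists l : nat -> nat, x = \sum_(j < size t) l j * nth 0 t j.

(* phi_i = k for the ordering n (0-based index i, 1 <= i < nu):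
   phi_i = min{h >= 1 : h n_i in <n_1,...,n_{i-1}>} - 1 *)
Definition is_phi (n : seq nat) (i k : nat) : Prop :=
  in_monoid (take i n) (k.+1 * nth 0 n i) /\
  forall h, 0 < h -> in_monoid (take i n) (h * nth 0 n i) -> k.+1 <= h.

Definition free (S : nat -> Prop) (g : seq nat) : Prop :=
  exists n : seq nat, perm_eq n g /\
    exists phi : nat -> nat,
      (forall i, 1 <= i < size n -> is_phi n i (phi i)) /\
      forall x, apery S (nth 0 n 0) x <->
        exists lam : nat -> nat,
          (forall i, 1 <= i < size n -> lam i <= phi i) /\
          x = \sum_(1 <= i < size n) lam i * nth 0 n i.

Definition S569 (x : nat) : Prop := exists a b c, x = 5 * a + 6 * b + 9 * c.

(* Main.v *)
Require Import Defs.
From mathcomp Require Import all_boot zify.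
From mathcomp Require all_algebra all_field.
From Stdlib Require Import Classical.
Set Implicit Arguments. Unset Strict Implicit. Unset Printing Implicit Defensive.

Module A.

Section Basics.
Variable S : nat -> Prop.
Variable g : seq nat.
Hypothesis hS : numerical_semigroup S.
Hypothesis hg : min_gens S g.

Let nu := size g.
Let G i := nth 0 g i.

Definition valv (v : nat -> nat) := \sum_(i < size g) v i * nth 0 g i.
Definition lenv (v : nat -> nat) := \sum_(i < size g) v i.
Definition ev (j c : nat) := fun i => if i == j then c else 0.

Lemma S0 : S 0. Proof. by case: hS. Qed.
Lemma Sadd a b : S a -> S b -> S (a + b). Proof. by case: hS => _ h _; apply: h. Qed.

Lemma G_min i : i < size g -> min_generator S (nth 0 g i).
Proof. by move=> hi; case: hg => _ h; apply/h; apply: mem_nth. Qed.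
Lemma G_S i : i < size g -> S (nth 0 g i). Proof. by case/G_min. Qed.
Lemma G_pos i : i < size g -> 0 < nth 0 g i. Proof. by case/G_min. Qed.
Lemma G_mono i j : i < j -> j < size g -> nth 0 g i < nth 0 g j.
Proof.
move=> hij hj; case: hg => hs _.
apply: (sorted_ltn_nth ltn_trans 0 hs) => //=; rewrite inE /=; lia.
Qed.
Lemma G_inj i j : i < size g -> j < size g -> nth 0 g i = nth 0 g j -> i = j.
Proof.
move=> hi hj e; case: (ltngtP i j) => // h.
- by have := G_mono h hj; rewrite e ltnn.
- by have := G_mono h hi; rewrite e ltnn.
Qed.

Lemma valv_ext u v : (forall i, i < size g -> u i = v i) -> valv u = valv v.
Proof. by move=> h; apply: eq_bigr => i _; rewrite h. Qed.
Lemma lenv_ext u v : (forall i, i < size g -> u i = v i) -> lenv u = lenv v.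
Proof. by move=> h; apply: eq_bigr => i _; rewrite h. Qed.
Lemma valv_add u v : valv (fun i => u i + v i) = valv u + valv v.
Proof. by rewrite /valv -big_split /=; apply: eq_bigr => i _; rewrite mulnDl. Qed.
Lemma lenv_add u v : lenv (fun i => u i + v i) = lenv u + lenv v.
Proof. by rewrite /lenv -big_split. Qed.
Lemma valv_sub u v : (forall i, i < size g -> v i <= u i) ->
  valv (fun i => u i - v i) = valv u - valv v.
Proof.
move=> h; apply/eqP; rewrite -(eqn_add2r (valv v)) -valv_add subnK.
  by apply/eqP/valv_ext => i hi; rewrite subnK // h.
by rewrite /valv; apply: leq_sum => i _; rewrite leq_mul2r h ?orbT.
Qed.
Lemma lenv_sub u v : (forall i, i < size g -> v i <= u i) ->
  lenv (fun i => u i - v i) = lenv u - lenv v.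
Proof.
move=> h; apply/eqP; rewrite -(eqn_add2r (lenv v)) -lenv_add subnK.
  by apply/eqP/lenv_ext => i hi; rewrite subnK // h.
by rewrite /lenv; apply: leq_sum => i _; rewrite h.
Qed.
Lemma valv_ev j c : j < size g -> valv (ev j c) = c * nth 0 g j.
Proof.
move=> hj; rewrite /valv (bigD1 (Ordinal hj)) //= big1 ?addn0.
  by rewrite /ev eqxx.
by move=> i /negPf ne; rewrite /ev; case: eqP => // e; move: ne; rewrite -val_eqE /= e eqxx.
Qed.
Lemma lenv_ev j c : j < size g -> lenv (ev j c) = c.
Proof.
move=> hj; rewrite /lenv (bigD1 (Ordinal hj)) //= big1 ?addn0.
  by rewrite /ev eqxx.
by move=> i /negPf ne; rewrite /ev; case: eqP => // e; move: ne; rewrite -val_eqE /= e eqxx.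
Qed.
Lemma valv_ge v i : i < size g -> v i * nth 0 g i <= valv v.
Proof.
move=> hi; rewrite /valv (bigD1 (Ordinal hi)) //=; apply: leq_addr.
Qed.
Lemma lenv_ge v i : i < size g -> v i <= lenv v.
Proof.
move=> hi; rewrite /lenv (bigD1 (Ordinal hi)) //=; apply: leq_addr.
Qed.
Lemma coord_le_valv v i : i < size g -> v i <= valv v.
Proof.
move=> hi; apply: leq_trans (valv_ge v hi); rewrite leq_pmulr //; exact: G_pos.
Qed.
Lemma valv0 v : valv v = 0 -> forall i, i < size g -> v i = 0.
Proof.
move=> h i hi; have := valv_ge v hi; rewrite h leqn0 muln_eq0 => /orP[/eqP //|].
by rewrite eqn0Ngt G_pos.
Qed.
Lemma lenv0 v : lenv v = 0 -> forall i, i < size g -> v i = 0.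
Proof. by move=> h i hi; have := lenv_ge v hi; rewrite h leqn0 => /eqP. Qed.
Lemma valv_mono u v : (forall i, i < size g -> u i <= v i) -> valv u <= valv v.
Proof. by move=> h; apply: leq_sum => i _; rewrite leq_mul2r h ?orbT. Qed.

Lemma S_valv v : S (valv v).
Proof.
rewrite /valv; elim/big_ind: _ => //; first exact: S0.
  by move=> x y; apply: Sadd.
move=> i _; elim: (v i) => [|n IH]; first by rewrite mul0n; exact: S0.
by rewrite mulSn; apply: Sadd => //; apply: G_S.
Qed.

End Basics.

End A.
Import A.

Module B.

Section Apery.
Variable S : nat -> Prop.
Variable g : seq nat.
Hypothesis hS : numerical_semigroup S.
Hypothesis hg : min_gens S g.
Hypothesis hg0 : 0 < size g.

Local Notation m := (nth 0 g 0).
Local Notation Ap := (apery S (nth 0 g 0)).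

Let S0 := S0 hS.
Let Sadd := Sadd hS.
Lemma m_pos : 0 < m. Proof. exact: (G_pos hg hg0). Qed.
Lemma m_S : S m. Proof. exact: (G_S hg hg0). Qed.

Lemma Smul a : S (a * m).
Proof. elim: a => [|a IH]; first by rewrite mul0n; exact: S0. by rewrite mulSn; apply: Sadd => //; exact: m_S. Qed.

Lemma ap_sub x a b : Ap x -> x = a + b -> S a -> S b -> Ap a.
Proof.
move=> [Sx hx] e Sa Sb; split=> //.
case: (ltnP a m) => [|ham]; first by left.
right=> Sam; case: hx => [|].
  by move=> h; lia.
apply; have -> : x - m = (a - m) + b by lia.
exact: Sadd.
Qed.

Lemma ap_mod x y : Ap x -> Ap y -> x = y %[mod m] -> x = y.
Proof.
wlog: x y / x <= y.
  move=> W ax ay e; case: (leqP x y) => h; first exact: W.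
  by symmetry; apply: W => //; apply: ltnW.
move=> hxy [Sx _] [Sy hy] e.
have: m %| y - x by rewrite -eqn_mod_dvd //; apply/eqP; rewrite e.
case/dvdnP=> q eq.
case: q eq => [|q] eq; first by lia.
case: hy => [h|]; first by have := m_pos; nia.
case; have -> : y - m = x + q * m by nia.
by apply: Sadd => //; apply: Smul.
Qed.

Lemma ap_decomp y : S y -> exists a w, Ap w /\ y = a * m + w.
Proof.
elim/ltn_ind: y => y IH Sy.
case: (ltnP y m) => hy.
  by exists 0, y; split=> //; split=> //; left.
case: (classic (S (y - m))) => h.
  have [a [w [aw e]]] := IH (y - m) ltac:(have := m_pos; lia) h.
  by exists a.+1, w; split=> //; lia.
by exists 0, y; split=> //; split=> //; right.
Qed.

Lemma ap_res r : exists w, Ap w /\ w = r %[mod m].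
Proof.
case: hS => _ _ [F hF].
have Sy : S (r + F * m) by apply: hF; have := m_pos; nia.
have [a [w [aw e]]] := ap_decomp Sy.
exists w; split=> //.
have : (F * m + r) = w %[mod m] by rewrite addnC e modnMDl.
by rewrite modnMDl => ->.
Qed.

End Apery.

End B.
Import B.

Module C.

Lemma sumn_nth (l : seq nat) : sumn l = \sum_(i < size l) nth 0 l i.
Proof. by rewrite sumnE (big_nth 0) big_mkord. Qed.

Section Rect.
Variable S : nat -> Prop.
Variable g : seq nat.
Variable gam : nat -> nat.
Hypothesis hS : numerical_semigroup S.
Hypothesis hg : min_gens S g.
Hypothesis hgam : forall i, 1 <= i < size g -> is_gamma S g i (gam i).
Hypothesis hAp : forall x, apery S (nth 0 g 0) x <->
      exists lam : nat -> nat,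
        (forall i, 1 <= i < size g -> lam i <= gam i) /\
        x = \sum_(1 <= i < size g) lam i * nth 0 g i.

Local Notation nu := (size g).
Local Notation G i := (nth 0 g i).
Local Notation m := (nth 0 g 0).
Local Notation Ap := (apery S (nth 0 g 0)).
Local Notation valv := (valv g).
Local Notation lenv := (lenv g).

Lemma hg0 : 0 < size g.
Proof.
have : Ap 0 by apply/hAp; exists (fun _ => 0); split=> //; rewrite big1.
case=> _ [h|h]; last by case: h; exact: (S0 hS).
by case: (ltnP 0 nu) => // /(nth_default 0) e; move: h; rewrite e.
Qed.

Definition gam0 i := if i == 0 then 0 else gam i.
Definition inB (v : nat -> nat) := forall i, i < size g -> v i <= gam0 i.

Lemma valv_split v : valv v = v 0 * m + \sum_(1 <= i < size g) v i * G i.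
Proof. by rewrite /A.valv -(big_mkord xpredT (fun i => v i * nth 0 g i)) big_ltn // hg0. Qed.

Lemma box_ap v : inB v -> Ap (valv v).
Proof.
move=> hv; apply/hAp; exists v; split.
  by move=> i /andP[h1 h2]; have := hv i h2; rewrite /gam0; case: eqP => //; lia.
have := hv 0 hg0; rewrite /gam0 eqxx leqn0 => /eqP h.
by rewrite valv_split h.
Qed.

Lemma ap_box x : Ap x -> exists v, inB v /\ x = valv v.
Proof.
case/hAp=> lam [hl ->]; exists (fun i => if i == 0 then 0 else lam i); split.
  by move=> i hi; rewrite /gam0; case: eqP => // /eqP ne; apply: hl; lia.
rewrite valv_split /= mul0n add0n; apply: eq_big_nat => i /andP[h1 _].
by case: eqP => //; lia.
Qed.

Lemma mkseq_rep v : is_rep g (valv v) (mkseq v nu) /\ sumn (mkseq v nu) = lenv v.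
Proof.
split; first split; first by rewrite size_mkseq.
  by apply: valv_ext => i hi; rewrite nth_mkseq.
by rewrite sumn_nth size_mkseq; apply: eq_bigr => i _; rewrite nth_mkseq.
Qed.

Lemma rep_valv s l : is_rep g s l -> valv (nth 0 l) = s /\ sumn l = lenv (nth 0 l).
Proof. by case=> hs hv; split=> //; rewrite sumn_nth hs. Qed.

Lemma gam_ap i : 1 <= i < nu -> Ap (gam i * G i).
Proof. by move=> hi; case: (hgam hi) => -[]. Qed.

Lemma gam_len i v : 1 <= i < nu -> valv v = gam i * G i -> lenv v <= gam i.
Proof.
move=> hi hv; case: (hgam hi) => -[_ [_ hord] _] _.
have [hr hs] := mkseq_rep v; rewrite -hs; apply: hord; by rewrite -hv.
Qed.

Lemma gam_uniq i v : 1 <= i < nu -> valv v = gam i * G i -> lenv v = gam i ->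
  forall t, t < nu -> v t = ev i (gam i) t.
Proof.
move=> hi hv hl; case: (hgam hi) => -[_ [_ hord] [l0 [_ hu]]] _.
have hi' : i < nu by case/andP: hi.
have E1 : mkseq v nu = l0.
  apply: hu; have [hr hs] := mkseq_rep v; split; first by rewrite -hv.
  by move=> l' /hord; rewrite hs hl.
have E2 : mkseq (ev i (gam i)) nu = l0.
  apply: hu; have [hr hs] := mkseq_rep (ev i (gam i)); split.
    by rewrite -(valv_ev (gam i) hi').
  by move=> l' /hord; rewrite hs lenv_ev.
move=> t ht; have := congr1 (nth 0 ^~ t) (etrans E1 (esym E2)).
by rewrite !nth_mkseq.
Qed.

Lemma gam_next i : 1 <= i < nu -> Ap ((gam i).+1 * G i) ->
  exists rho, valv rho = (gam i).+1 * G i /\ (gam i).+1 <= lenv rho /\ rho i = 0.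
Proof.
move=> hi hap; have hi' : i < nu by case/andP: hi.
case: (hgam hi) => _ hmax.
set s := (gam i).+1 * G i.
have hrep0 := mkseq_rep (ev i (gam i).+1).
rewrite (valv_ev _ hi') lenv_ev // in hrep0.
suff [rho [h1 [h2 h3]]] : exists rho, valv rho = s /\ (gam i).+1 <= lenv rho /\
   ((gam i).+1 < lenv rho \/ exists t, t < nu /\ rho t <> ev i (gam i).+1 t).
  exists rho; split=> //; split=> //.
  case: (posnP (rho i)) => // hpos.
  pose r' := fun t => rho t - ev i 1 t.
  have hle : forall t, t < nu -> ev i 1 t <= rho t by move=> t _; rewrite /ev; case: eqP => // ->.
  have hv' : valv r' = gam i * G i by rewrite valv_sub // h1 valv_ev // /s mulSn; lia.
  have hl' : lenv r' = lenv rho - 1 by rewrite lenv_sub // lenv_ev.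
  have := gam_len hi hv'; rewrite hl' => hle2.
  have hl'' : lenv r' = gam i by rewrite hl'; lia.
  have hu := gam_uniq hi hv' hl''.
  case: h3 => [|[t [ht hne]]]; first by lia.
  exfalso; apply: hne; have := hu t ht; rewrite /r' /ev; case: eqP => [->|_]; lia.
case: (classic (forall l, is_rep g s l -> sumn l <= (gam i).+1)) => hall; last first.
  have [l hl] : exists l, ~ (is_rep g s l -> sumn l <= (gam i).+1).
    by apply: not_all_ex_not.
  have [hr hn] := imply_to_and _ _ hl.
  have [hv hs] := rep_valv hr.
  exists (nth 0 l); split=> //; rewrite -hs; split; [lia | left; lia].
have hord : is_ord g s (gam i).+1.
  by split=> //; exists (mkseq (ev i (gam i).+1) nu); case: hrep0.
have nu_ : ~ unique_maximal_rep g s.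
  move=> hu; have : gamma_cond S g i (gam i).+1 by split.
  by move/hmax; rewrite ltnn.
have hmax0 : maximal_rep g s (mkseq (ev i (gam i).+1) nu).
  by case: hrep0 => hr hs; split=> //; rewrite hs.
have [l' hl'] : exists l', ~ (maximal_rep g s l' -> l' = mkseq (ev i (gam i).+1) nu).
  apply: not_all_ex_not => h; apply: nu_; by exists (mkseq (ev i (gam i).+1) nu).
have [[hr hm] hne] := imply_to_and _ _ hl'.
have [hv hs] := rep_valv hr.
have hle := hm _ (proj1 hrep0); rewrite (proj2 hrep0) in hle.
exists (nth 0 l'); split=> //; rewrite -hs; split=> //; right.
apply: NNPP => hn; apply: hne.
apply: (@eq_from_nth _ 0); first by rewrite size_mkseq; case: hr.
move=> t; case: hr => -> _ ht; rewrite nth_mkseq //.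
by apply: NNPP => h; apply: hn; exists t.
Qed.

End Rect.

End C.
Import C.

Module D.

Lemma sq_id a b r : r * a ^ 2 + r * b ^ 2 = 2 * b * (r * a) + r * ((a - b) + (b - a)) ^ 2.
Proof.
case: (leqP a b) => h.
  have [d ->] : exists d, b = a + d by exists (b - a); lia.
  have -> : a - (a + d) = 0 by lia.
  rewrite add0n addKn; rewrite !expnS !expn0 !muln1; nia.
have [d ->] : exists d, a = b + d by exists (a - b); lia.
have -> : b - (b + d) = 0 by lia.
rewrite addn0 addKn; rewrite !expnS !expn0 !muln1; nia.
Qed.

Section Inj.
Variable S : nat -> Prop.
Variable g : seq nat.
Variable gam : nat -> nat.
Hypothesis hS : numerical_semigroup S.
Hypothesis hg : min_gens S g.
Hypothesis hgam : forall i, 1 <= i < size g -> is_gamma S g i (gam i).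
Hypothesis hAp : forall x, apery S (nth 0 g 0) x <->
      exists lam : nat -> nat,
        (forall i, 1 <= i < size g -> lam i <= gam i) /\
        x = \sum_(1 <= i < size g) lam i * nth 0 g i.

Local Notation nu := (size g).
Local Notation G i := (nth 0 g i).
Local Notation m := (nth 0 g 0).
Local Notation Ap := (apery S (nth 0 g 0)).
Local Notation valv := (valv g).
Local Notation lenv := (lenv g).
Local Notation gam0 := (gam0 gam).
Local Notation inB := (inB g gam).

Let hg0 := hg0 hS hAp.

Definition wsum (w v : nat -> nat) := \sum_(i < size g) v i * w i.
Lemma wsum_ext w u v : (forall i, i < nu -> u i = v i) -> wsum w u = wsum w v.
Proof. by move=> h; apply: eq_bigr => i _; rewrite h. Qed.
Lemma wsum_add w u v : wsum w (fun i => u i + v i) = wsum w u + wsum w v.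
Proof. by rewrite /wsum -big_split /=; apply: eq_bigr => i _; rewrite mulnDl. Qed.
Lemma wsum_sub w u v : (forall i, i < nu -> v i <= u i) ->
  wsum w (fun i => u i - v i) = wsum w u - wsum w v.
Proof.
move=> h; apply/eqP; rewrite -(eqn_add2r (wsum w v)) -wsum_add subnK.
  by apply/eqP/wsum_ext => i hi; rewrite subnK // h.
by rewrite /wsum; apply: leq_sum => i _; rewrite leq_mul2r h ?orbT.
Qed.
Lemma wsum_ge w v i : i < nu -> v i * w i <= wsum w v.
Proof. by move=> hi; rewrite /wsum (bigD1 (Ordinal hi)) //=; apply: leq_addr. Qed.
Lemma wsum_le w u v : (forall i, i < nu -> u i <= v i) -> wsum w u <= wsum w v.
Proof. by move=> h; apply: leq_sum => i _; rewrite leq_mul2r h ?orbT. Qed.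

Definition W := valv gam0.
Definition Mw := (\sum_(i < size g) (gam i).+1 * G i ^ 2).+1.
Definition wt i := Mw + G i ^ 2.
Definition psi := wsum wt.

Lemma inB_gam0 : inB gam0. Proof. by []. Qed.
Lemma W_ap : Ap W. Proof. exact: box_ap. Qed.

Lemma psi_split v : psi v = Mw * lenv v + wsum (fun i => G i ^ 2) v.
Proof.
rewrite /psi /wsum /A.lenv big_distrr -big_split /=.
by apply: eq_bigr => i _; rewrite /wt mulnDr mulnC.
Qed.

Lemma step v : valv v = W -> (exists t, t < nu /\ gam0 t < v t) ->
  exists v', valv v' = W /\ psi v < psi v'.
Proof.
move=> hv [t [ht hlt]].
have t0 : t != 0.
  apply/negP => /eqP et; subst t.
  have [_ hW] := W_ap.
  have le1 : forall i, i < nu -> ev 0 1 i <= v i by move=> i _; rewrite /ev; case: eqP => // ->; lia.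
  have e : W = m + valv (fun i => v i - ev 0 1 i).
    by rewrite valv_sub // valv_ev // mul1n -hv; have := valv_ge v hg0; move: hlt; rewrite /C.gam0 eqxx; nia.
  case: hW => [|]; first by have := valv_ge v hg0; rewrite hv; move: hlt; rewrite /C.gam0 eqxx; nia.
  by apply; rewrite e addKn; apply: (S_valv hS hg).
have g0t : gam0 t = gam t by rewrite /gam0 (negPf t0).
rewrite g0t in hlt.
have hti : 1 <= t < nu by rewrite ht andbT lt0n.
set c := (gam t).+1.
have lec : forall i, i < nu -> ev t c i <= v i by move=> i _; rewrite /ev; case: eqP => // ->.
have e : W = c * G t + valv (fun i => v i - ev t c i).
  rewrite valv_sub // valv_ev // hv subnKC //.
  by rewrite -hv; apply: (leq_trans _ (valv_ge v ht)); rewrite leq_mul2r hlt orbT.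
have hap : Ap (c * G t).
  apply: (ap_sub hS hg0 W_ap e); last exact: (S_valv hS hg).
  by rewrite -(valv_ev c ht); apply: (S_valv hS hg).
have [rho [hr1 [hr2 hr3]]] := gam_next hgam hti hap.
exists (fun i => v i - ev t c i + rho i); split.
  by rewrite valv_add valv_sub // hr1 valv_ev // hv subnK //; rewrite -hv -valv_ev //; apply: valv_mono.
rewrite /psi wsum_add wsum_sub // -/psi.
have hpt : c * wt t <= psi v.
  by have := wsum_ge wt v ht; move/(leq_trans _); apply; rewrite leq_mul2r hlt orbT.
have : psi (ev t c) = c * wt t.
  rewrite /psi /wsum (bigD1 (Ordinal ht)) //= big1 ?addn0; first by rewrite /ev eqxx.
  by move=> i /negPf ne; rewrite /ev; case: eqP => // ei; move: ne; rewrite -val_eqE /= ei eqxx.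
move=> ->.
suff : c * wt t < psi rho by lia.
have hM : c * G t ^ 2 < Mw.
  rewrite /Mw ltnS (bigD1 (Ordinal ht)) //=; apply: leq_addr.
rewrite psi_split /wt.
case: (ltnP c (lenv rho)) => hl.
  have h1 : Mw * c.+1 <= Mw * lenv rho by rewrite leq_mul2l hl orbT.
  move: h1 hM; set X := G t ^ 2; set Y := wsum _ rho; set L := lenv rho; nia.
have hlc : lenv rho = c by lia.
rewrite hlc mulnDr mulnC ltn_add2l.
set D := fun i => (G i - G t) + (G t - G i).
have key : forall i, i < nu -> rho i * G i ^ 2 + rho i * G t ^ 2 =
     2 * G t * (rho i * G i) + rho i * D i ^ 2.
  by move=> i _; rewrite /D sq_id.
have sumkey : wsum (fun i => G i ^ 2) rho + lenv rho * G t ^ 2 =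
   2 * G t * valv rho + wsum (fun i => D i ^ 2) rho.
  rewrite /wsum /A.lenv /A.valv big_distrl big_distrr -!big_split /=.
  by apply: eq_bigr => i _; rewrite key // ltn_ord.
rewrite hlc hr1 in sumkey.
have pos : 0 < wsum (fun i => D i ^ 2) rho.
  have [i [hi hri]] : exists i, i < nu /\ 0 < rho i.
    apply: NNPP => hn; have : lenv rho = 0.
      rewrite /A.lenv big1 // => i _; apply: NNPP => hh; apply: hn; exists i; split=> //; lia.
    by lia.
  have hit : i != t by apply/eqP => eit; subst i; lia.
  have hD : 0 < D i.
    have : G i != G t by apply/eqP => /(G_inj hg hi ht) eit; move: hit; rewrite eit eqxx.
    by rewrite /D; lia.
  by apply: (leq_trans _ (wsum_ge _ _ hi)); rewrite muln_gt0 hri expn_gt0 hD.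
move: sumkey pos; set Y := wsum _ rho; set Z := wsum _ rho; rewrite /c; set b := G t.
rewrite !expnS !expn0 !muln1; nia.
Qed.


Definition Ub := W * \sum_(i < size g) wt i.

Lemma psi_le_Ub v : valv v = W -> psi v <= Ub.
Proof.
move=> hv; rewrite /psi /wsum /Ub big_distrr; apply: leq_sum => i _.
by rewrite leq_mul2r -hv (coord_le_valv hg) ?orbT.
Qed.

Lemma psi_max v : valv v = W -> psi v <= psi gam0.
Proof.
move=> hv; move: {2}(Ub - psi v) (erefl (Ub - psi v)) => k.
elim/ltn_ind: k v hv => k IH v hv ek.
case: (classic (exists t, t < nu /\ gam0 t < v t)) => h.
  have [v' [hv' hlt]] := step hv h.
  have := psi_le_Ub hv'; have := psi_le_Ub hv => h1 h2.
  apply: leq_trans (ltnW hlt) _; apply: (IH (Ub - psi v')) => //; lia.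
have hle : forall t, t < nu -> v t <= gam0 t.
  by move=> t ht; apply: NNPP => hn; apply: h; exists t; split=> //; lia.
have : valv (fun i => gam0 i - v i) = 0 by rewrite valv_sub // hv subnn.
move/(valv0 hg) => h0.
rewrite leq_eqVlt; apply/orP; left; apply/eqP; apply: wsum_ext => i hi.
by have := h0 i hi; have := hle i hi; lia.
Qed.

Lemma box_inj l u : inB l -> inB u -> valv l = valv u -> forall t, t < nu -> l t = u t.
Proof.
move=> hl hu e.
have side : forall a b : nat -> nat, inB a -> inB b -> valv a = valv b ->
   psi (fun i => gam0 i - a i + b i) = psi gam0 ->
   forall t, t < nu -> b t <= a t.
  move=> a b ha hb eab hpsi t ht; apply: NNPP => hn.
  have hva : valv (fun i => gam0 i - a i + b i) = W.
    rewrite valv_add valv_sub // -eab subnK //; exact: valv_mono.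
  have hex : exists t, t < nu /\ gam0 t < (fun i => gam0 i - a i + b i) t.
    by exists t; split=> //=; have := ha t ht; lia.
  have [v' [hv' hlt]] := step hva hex.
  by have := psi_max hv'; rewrite -hpsi; lia.
have v1 : valv (fun i => gam0 i - l i + u i) = W.
  by rewrite valv_add valv_sub // e subnK //; rewrite -e; exact: valv_mono.
have v2 : valv (fun i => gam0 i - u i + l i) = W.
  by rewrite valv_add valv_sub // -e subnK //; rewrite e; exact: valv_mono.
have p1 := psi_max v1; have p2 := psi_max v2.
have p12 : psi (fun i => gam0 i - l i + u i) + psi (fun i => gam0 i - u i + l i) =
   psi gam0 + psi gam0.
  rewrite /psi -!wsum_add; apply: wsum_ext => i hi.
  by have := hl i hi; have := hu i hi; lia.
have e1 : psi (fun i => gam0 i - l i + u i) = psi gam0 by lia.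
have e2 : psi (fun i => gam0 i - u i + l i) = psi gam0 by lia.
move=> t ht; apply/eqP; rewrite eqn_leq.
by rewrite (side u l hu hl (esym e) e2 t ht) (side l u hl hu e e1 t ht).
Qed.

Lemma box_inj_mod l u : inB l -> inB u -> valv l = valv u %[mod m] ->
   forall t, t < nu -> l t = u t.
Proof.
move=> hl hu e; apply: box_inj => //.
apply: (ap_mod hS hg hg0) => //; exact: box_ap.
Qed.

End Inj.

End D.
Import D.

Module E.

Section Clos.
Variable S : nat -> Prop.
Variable g : seq nat.
Variable gam : nat -> nat.
Hypothesis hS : numerical_semigroup S.
Hypothesis hg : min_gens S g.
Hypothesis hgam : forall i, 1 <= i < size g -> is_gamma S g i (gam i).
Hypothesis hAp : forall x, apery S (nth 0 g 0) x <->
      exists lam : nat -> nat,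
        (forall i, 1 <= i < size g -> lam i <= gam i) /\
        x = \sum_(1 <= i < size g) lam i * nth 0 g i.

Local Notation nu := (size g).
Local Notation G i := (nth 0 g i).
Local Notation m := (nth 0 g 0).
Local Notation Ap := (apery S (nth 0 g 0)).
Local Notation valv := (valv g).
Local Notation lenv := (lenv g).
Local Notation gam0 := (gam0 gam).
Local Notation inB := (inB g gam).

Let hg0 := hg0 hS hAp.

Definition supp (L : seq nat) (v : nat -> nat) := forall t, t < nu -> t \notin L -> v t = 0.
Definition inBL L v := inB v /\ supp L v.
Definition HL L x := exists v, inBL L v /\ x = valv v %[mod m].
Definition CL L := forall c, supp L c -> HL L (valv c).
Definition Good L i := exists a k, inBL L k /\ (gam i).+1 * G i = a * m + valv k.

Lemma valv_zero : valv (fun _ => 0) = 0. Proof. by rewrite /A.valv big1. Qed.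
Lemma inBL_zero L : inBL L (fun _ => 0). Proof. by split. Qed.

Lemma HL_mod L x y : HL L x -> x = y %[mod m] -> HL L y.
Proof. by case=> v [hv e] e2; exists v; split=> //; rewrite -e2. Qed.

Lemma HL_add L x y : CL L -> HL L x -> HL L y -> HL L (x + y).
Proof.
move=> hC [vx [[_ sx] ex]] [vy [[_ sy] ey]].
have : supp L (fun i => vx i + vy i) by move=> t ht hn; rewrite sx // sy.
move/hC; rewrite valv_add => h; apply: (HL_mod h).
by rewrite -modnDm -ex -ey modnDm.
Qed.

Lemma HL_sub L L' x : {subset L <= L'} -> HL L x -> HL L' x.
Proof.
move=> hs [v [[hb hsu] e]]; exists v; split=> //; split=> // t ht hn.
apply: hsu => //; apply/negP => /hs; exact/negP.
Qed.

Lemma clo_CL L : (forall v, inBL L v -> forall t, t \in L -> t < nu -> HL L (valv v + G t)) ->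
  CL L.
Proof.
move=> hclo c; move: {2}(lenv c) (leqnn (lenv c)) => n.
elim: n c => [|n IH] c hl hc.
  have e : valv c = 0.
    rewrite (valv_ext (v:=fun _ => 0)) ?valv_zero //.
    by apply: (lenv0 (g:=g)); lia.
  by exists (fun _ => 0); split; [exact: inBL_zero | rewrite e valv_zero].
case: (classic (exists t, t < nu /\ 0 < c t)) => [[t [ht hct]]|hn]; last first.
  have e : valv c = 0.
    rewrite (valv_ext (v:=fun _ => 0)) ?valv_zero // => i hi.
    by apply: NNPP => hh; apply: hn; exists i; split=> //; lia.
  by exists (fun _ => 0); split; [exact: inBL_zero | rewrite e valv_zero].
have tL : t \in L by apply: NNPP => /negP hn; have := hc t ht hn; lia.
set c' := fun i => c i - ev t 1 i.
have le1 : forall i, i < nu -> ev t 1 i <= c i by move=> i _; rewrite /ev; case: eqP => // ->.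
have hl' : lenv c' <= n by rewrite /c' lenv_sub // lenv_ev //; lia.
have hc' : supp L c' by move=> i hi hiL; rewrite /c' hc.
have [v [hv e]] := IH c' hl' hc'.
have : valv c = valv c' + G t.
  rewrite /c' valv_sub // valv_ev // mul1n subnK //.
  by apply: (leq_trans _ (valv_ge c ht)); rewrite leq_pmull.
move=> ->; apply: (HL_mod (hclo v hv t tL ht)).
by rewrite -modnDml -e modnDml.
Qed.

Lemma CL_base : CL [:: 0].
Proof.
move=> c hc; exists (fun _ => 0); split; first exact: inBL_zero.
rewrite valv_zero (valv_split hS hAp) big_nat_cond big1 ?addn0.
  by rewrite modnMl mod0n.
move=> i /andP[/andP[h1 h2] _].
by rewrite hc // ?mul0n // inE; case: eqP => //; lia.
Qed.


Lemma CL_step L i : CL L -> 1 <= i < nu -> i \notin L -> Good L i -> CL (rcons L i).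
Proof.
move=> hC hi iL [a [k [[kb ks] ek]]].
have hi' : i < nu by case/andP: hi.
have i0 : i != 0 by case/andP: hi; rewrite lt0n.
have sub : {subset L <= rcons L i} by move=> x xL; rewrite mem_rcons inE xL orbT.
apply: clo_CL => v [vb vs] t tL ht.
set vL := fun x => if x == i then 0 else v x.
have vLs : supp L vL.
  move=> x hx hxL; rewrite /vL; case: eqP => // /eqP ne.
  by apply: vs => //; rewrite mem_rcons inE negb_or ne.
have vLb : inB vL by move=> x hx; rewrite /vL; case: eqP => // _; exact: vb.
have ev_v : valv v = valv vL + v i * G i.
  rewrite -(valv_ev _ hi') -valv_add; apply: valv_ext => x hx.
  by rewrite /vL /ev; case: eqP => [->|]; lia.
case: (eqVneq t i) => [eti|nti].
  subst t; case: (ltnP (v i) (gam0 i)) => hvi.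
    exists (fun x => v x + ev i 1 x); split.
      split.
        move=> x hx; rewrite /ev; case: eqP => [->|_]; first by rewrite addn1.
        by rewrite addn0 vb.
      move=> x hx hn; rewrite /ev; case: eqP => [ex|_]; first by move: hn; rewrite ex mem_rcons mem_head.
      by rewrite addn0 vs.
    by rewrite valv_add valv_ev // mul1n.
  have gi : gam0 i = gam i by rewrite /C.gam0 (negPf i0).
  have vi : v i = gam i by have := vb i hi'; rewrite -gi; lia.
  have : valv v + G i = a * m + valv (fun x => vL x + k x).
    by rewrite valv_add ev_v vi; move: ek; rewrite mulSn; lia.
  have cs : supp L (fun x => vL x + k x).
    by move=> x hx hxL /=; rewrite (ks x hx hxL) addn0; apply: vLs.
  move=> ->; apply: (HL_sub sub); apply: (HL_mod (hC _ cs)).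
  by rewrite modnMDl.
have tL' : t \in L by move: tL; rewrite mem_rcons inE (negPf nti).
have cs : supp L (fun x => vL x + ev t 1 x).
  move=> x hx hxL; rewrite vLs // /ev; case: eqP => // ext.
  by move: hxL; rewrite ext tL'.
have [w [[wb ws] ew]] := hC _ cs.
have wi : w i = 0 by apply: ws.
exists (fun x => w x + ev i (v i) x); split.
  split.
    move=> x hx; rewrite /ev; case: eqP => [->|_]; first by rewrite wi add0n vb.
    by rewrite addn0 wb.
  move=> x hx hn; rewrite /ev; case: eqP => [ex|_]; first by move: hn; rewrite ex mem_rcons mem_head.
  rewrite addn0 ws //; apply/negP => xL; move: hn; rewrite mem_rcons inE xL orbT.
  done.
rewrite valv_add valv_ev // ev_v -addnAC.
rewrite -modnDml; move: ew; rewrite valv_add valv_ev // mul1n => ->.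
by rewrite modnDml.
Qed.

End Clos.

End E.
Import E.

Module F.
Import all_algebra all_field.
Import GRing.Theory Num.Theory.
Local Open Scope ring_scope.

Lemma root_lemma (nu N m d : nat) (G c : nat -> nat) :
  (1 < d)%N -> (d %| m)%N -> (0 < m)%N ->
  (forall i, c i < N)%N ->
  (forall r : 'I_m, exists f : {ffun 'I_nu -> 'I_N},
      f \in family (fun i : 'I_nu => [pred j : 'I_N | (j <= c i)%N]) /\
      ((\sum_(i < nu) f i * G i) %% m = r)%N) ->
  (forall f1 f2 : {ffun 'I_nu -> 'I_N},
      f1 \in family (fun i : 'I_nu => [pred j : 'I_N | (j <= c i)%N]) ->
      f2 \in family (fun i : 'I_nu => [pred j : 'I_N | (j <= c i)%N]) ->
      ((\sum_(i < nu) f1 i * G i) %% m = (\sum_(i < nu) f2 i * G i) %% m)%N -> f1 = f2) ->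
  exists i : 'I_nu, ~~ (d %| G i)%N /\ (d %| (c i).+1 * G i)%N.
Proof.
move=> d1 dm m0 cN hex huniq.
have [z hz] := C_prim_root_exists (ltnW d1).
have zm : z ^+ m = 1.
  by case/dvdnP: dm => q ->; rewrite mulnC exprM (prim_expr_order hz) expr1n.
have zmod : forall x, z ^+ x = z ^+ (x %% m)%N.
  by move=> x; rewrite {1}(divn_eq x m) exprD mulnC exprM zm expr1n mul1r.
have z1 : z != 1.
  apply/eqP => e; have := prim_order_dvd hz 1; rewrite expr1 e eqxx.
  by rewrite dvdn1 => /eqP; lia.
set Q := fun i : 'I_nu => [pred j : 'I_N | (j <= c i)%N].
set s := fun f : {ffun 'I_nu -> 'I_N} => (\sum_(i < nu) f i * G i)%N.
have sum0 : \sum_(r < m) z ^+ r = 0.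
  have : (z - 1) * \sum_(r < m) z ^+ r = 0 by rewrite -subrX1 zm subrr.
  by move/eqP; rewrite mulf_eq0 subr_eq0 (negPf z1) /= => /eqP.
have E : \prod_(i < nu) \sum_(j : 'I_N | Q i j) z ^+ (j * G i) = 0.
  rewrite bigA_distr_big_dep /=.
  rewrite (eq_bigr (fun f => z ^+ (s f %% m)%N)); last first.
    by move=> f _; rewrite prodrXr -zmod.
  rewrite (partition_big (fun f => Ordinal (ltn_pmod (s f) m0)) xpredT) //=.
  rewrite -[RHS]sum0; apply: eq_bigr => r _.
  have [f0 [hf0 hr0]] := hex r.
  rewrite (big_pred1 f0).
    by congr (z ^+ _); rewrite hr0.
  move=> f; rewrite /= -val_eqE /=.
  apply/idP/idP.
    case/andP=> hf /eqP hfr; apply/eqP; apply: huniq => //.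
    by rewrite /s in hfr; rewrite hfr hr0.
  by move/eqP ->; rewrite hf0 hr0 eqxx.
move/eqP: E => /prodf_eq0 [i _].
set x := z ^+ G i.
have fac : \sum_(j : 'I_N | Q i j) z ^+ (j * G i) = \sum_(j < (c i).+1) x ^+ j.
  rewrite (big_ord_widen _ (fun j => x ^+ j) (cN i)).
  by apply: eq_bigr => j _; rewrite /x -exprM mulnC.
rewrite fac => /eqP hf.
exists i.
have x1 : x != 1.
  apply/eqP => ex; move: hf; rewrite ex (eq_bigr (fun _ => 1)) => [|j _]; last by rewrite expr1n.
  by rewrite sumr_const card_ord => /eqP; rewrite pnatr_eq0.
split.
  by rewrite (prim_order_dvd hz).
rewrite (prim_order_dvd hz) mulnC exprM -/x -subr_eq0 subrX1 hf mulr0.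
by [].
Qed.

End F.
Import F.

Module G.

Lemma min_principle (P : nat -> Prop) : (exists n, P n) -> exists n, P n /\ forall k, k < n -> ~ P k.
Proof.
case=> n; elim/ltn_ind: n => n IH Pn.
case: (classic (exists k, k < n /\ P k)) => [[k [hk Pk]]|hn]; first exact: IH Pk.
by exists n; split=> // k hk Pk; apply: hn; exists k.
Qed.

Section Root.
Variable S : nat -> Prop.
Variable g : seq nat.
Variable gam : nat -> nat.
Hypothesis hS : numerical_semigroup S.
Hypothesis hg : min_gens S g.
Hypothesis hgam : forall i, 1 <= i < size g -> is_gamma S g i (gam i).
Hypothesis hAp : forall x, apery S (nth 0 g 0) x <->
      exists lam : nat -> nat,
        (forall i, 1 <= i < size g -> lam i <= gam i) /\
        x = \sum_(1 <= i < size g) lam i * nth 0 g i.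

Local Notation nu := (size g).
Local Notation G i := (nth 0 g i).
Local Notation m := (nth 0 g 0).
Local Notation Ap := (apery S (nth 0 g 0)).
Local Notation valv := (valv g).
Local Notation lenv := (lenv g).
Local Notation gam0 := (gam0 gam).
Local Notation inB := (inB g gam).
Local Notation HL := (HL g gam).
Local Notation CL := (CL g gam).
Local Notation inBL := (inBL g gam).
Local Notation supp := (supp g).

Let hg0 := hg0 hS hAp.
Let m0 := m_pos hg hg0.

Lemma mingen_rep j w : j < nu -> valv w = G j -> forall t, t < nu -> w t = ev j 1 t.
Proof.
move=> hj hw.
case: (classic (exists t, t < nu /\ 0 < w t)) => [[t [ht hwt]]|hn]; last first.
  have : valv w = 0.
    rewrite (valv_ext (v:=fun _ => 0)) ?valv_zero // => i hi.
    by apply: NNPP => hh; apply: hn; exists i; split=> //; lia.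
  by rewrite hw => e; have := G_pos hg hj; lia.
have le1 : forall i, i < nu -> ev t 1 i <= w i by move=> i _; rewrite /ev; case: eqP => // ->.
have e : G j = G t + valv (fun i => w i - ev t 1 i).
  rewrite valv_sub // valv_ev // mul1n hw subnKC //.
  by rewrite -hw; apply: (leq_trans _ (valv_ge w ht)); rewrite leq_pmull.
have [_ _ hmin] := G_min hg hj.
have z : valv (fun i => w i - ev t 1 i) = 0.
  apply: NNPP => hne; apply: hmin.
  exists (G t), (valv (fun i => w i - ev t 1 i)).
  split; [apply: (G_S hg ht) | apply: (S_valv hS hg) | apply: (G_pos hg ht) | lia | lia].
have tj : t = j by apply: (G_inj hg ht hj); lia.
subst t => t ht'; have := valv0 hg z ht'; have := le1 t ht'; rewrite /ev; case: eqP => [->|_]; lia.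
Qed.

Lemma gen_ap j : 1 <= j < nu -> Ap (G j).
Proof.
move=> /andP[hj1 hj2]; split; first exact: (G_S hg hj2).
right => hs; have [_ _ hmin] := G_min hg hj2; apply: hmin.
have hlt := G_mono hg hj1 hj2.
exists m, (G j - m); split; [exact: (m_S hg hg0) | exact: hs | exact: m0 | lia | lia].
Qed.

Lemma root_step L : CL L -> (forall t, t \in L -> t < nu) ->
  (exists j, 1 <= j < nu /\ j \notin L) ->
  exists i, [/\ 1 <= i < nu, i \notin L & Good g gam L i].
Proof.
move=> hC hL [j [hj jL]].
have Hm : HL L m.
  exists (fun _ => 0); split; first exact: inBL_zero.
  by rewrite valv_zero modnn mod0n.
have H0 : HL L 0 by exists (fun _ => 0); split; [exact: inBL_zero | rewrite valv_zero].
have Hmul : forall q x, HL L x -> HL L (q * x).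
  move=> q x hx; elim: q => [|q IH]; first by rewrite mul0n.
  by rewrite mulSn; apply: HL_add.
have [d [[d0 Hd] dmin]] := min_principle (ex_intro (fun d => 0 < d /\ HL L d) m (conj m0 Hm)).
have Hdiv : forall x, HL L x <-> d %| x.
  move=> x; split; last by case/dvdnP=> q ->; exact: (Hmul q d Hd).
  move=> hx; have hq : HL L (x + (x %/ d * d) * (m - 1)).
    apply: HL_add => //; rewrite mulnC; exact: (Hmul (m - 1) _ (Hmul (x %/ d) d Hd)).
  have hr : HL L (x %% d).
    apply: (HL_mod hq); rewrite {1}(divn_eq x d).
    have -> : x %/ d * d + x %% d + x %/ d * d * (m - 1) = x %% d + (x %/ d * d) * m.
      by rewrite [in RHS](_ : m = (m - 1).+1); [rewrite mulnS; lia | lia].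
    by rewrite addnC modnMDl.
  case: (posnP (x %% d)) => [/eqP|hpos]; first by rewrite -/(dvdn d x).
  by exfalso; apply: (dmin _ (ltn_pmod x d0)); split.
have dm : d %| m by apply/Hdiv.
have HG : forall t, t \in L -> d %| G t.
  move=> t tL; apply/Hdiv; have ht := hL t tL; rewrite -(mul1n (G t)) -(valv_ev 1 ht).
  by apply: hC => x hx hxL; rewrite /ev; case: eqP => // e; move: hxL; rewrite e tL.
have d1 : 1 < d.
  case: (ltnP 1 d) => // hd; exfalso.
  have : HL L (G j) by apply/Hdiv; have -> : d = 1 by lia.
  case=> v [[vb vs] ev_].
  have [w [wb ew]] := ap_box hS hAp (gen_ap hj).
  have hj' : j < nu by case/andP: hj.
  have := box_inj_mod hS hg hgam hAp wb vb; rewrite -ew => /(_ ev_ j hj').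
  by rewrite (mingen_rep hj' (esym ew) hj') vs // /ev eqxx.
set N := (W g gam).+1.
set c := fun i => if i < nu then gam0 i else 0.
have cN : forall i, c i < N.
  move=> i; rewrite /c; case: ifP => // hi; rewrite ltnS.
  by apply: (leq_trans _ (valv_ge _ hi)); rewrite leq_pmulr // (G_pos hg hi).
set fv := fun (f : {ffun 'I_nu -> 'I_N}) (i : nat) =>
  match insub i with Some k => nat_of_ord (f k) | None => 0 end.
have fvE : forall f (k : 'I_nu), fv f k = f k by move=> f k; rewrite /fv valK.
have valfv : forall f, valv (fv f) = \sum_(i < nu) f i * G i.
  by move=> f; apply: eq_bigr => i _; rewrite fvE.
have fvB : forall f, f \in family (fun i : 'I_nu => [pred j : 'I_N | j <= c i]) -> inB (fv f).
  move=> f /familyP hf i hi; have := hf (Ordinal hi); rewrite inE /c /= hi.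
  by rewrite -(fvE f (Ordinal hi)).
have [i [hi1 hi2]] : exists i : 'I_nu, ~~ (d %| G i) /\ (d %| (c i).+1 * G i).
  apply: (root_lemma d1 dm m0 cN).
    move=> r; have [w [wa wr]] := ap_res hS hg hg0 r.
    have [v [vb ew]] := ap_box hS hAp wa; rewrite ew in wr.
    have hlt : forall i : 'I_nu, v i < N.
      move=> i; apply: leq_ltn_trans (cN i); rewrite /c ltn_ord; exact: vb.
    exists [ffun i => Ordinal (hlt i)]; split.
      by apply/familyP => i; rewrite inE ffunE /= /c ltn_ord vb.
    have -> : \sum_(i < nu) [ffun i => Ordinal (hlt i)] i * G i = valv v.
      by apply: eq_bigr => i _; rewrite ffunE.
    by rewrite wr modn_small.
  move=> f1 f2 h1 h2 e; apply/ffunP => k; apply: val_inj.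
  have e' : valv (fv f1) = valv (fv f2) %[mod m] by rewrite !valfv.
  have := box_inj_mod hS hg hgam hAp (fvB _ h1) (fvB _ h2) e' (ltn_ord k).
  by rewrite !fvE.
have ci : c i = gam0 i by rewrite /c ltn_ord.
have iL : (i : nat) \notin L by apply/negP => /HG; rewrite (negbTE hi1).
have i0 : (i : nat) != 0 by apply/eqP => e; move: hi1; rewrite e dm.
have gi : gam0 i = gam i by rewrite /C.gam0 (negPf i0).
exists i; split=> //; first by rewrite ltn_ord andbT lt0n.
rewrite ci gi in hi2.
have [v [[vb vs] ev_]] : HL L ((gam i).+1 * G i) by apply/Hdiv.
have Ss : S ((gam i).+1 * G i) by rewrite -(valv_ev _ (ltn_ord i)); exact: (S_valv hS hg).
have [a [w [wa ew]]] := ap_decomp hg hg0 Ss.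
exists a, v; split; first by split.
rewrite ew; congr (_ + _); apply: (ap_mod hS hg hg0) => //; first exact: (box_ap hS hAp vb).
by move: ev_; rewrite ew modnMDl.
Qed.

End Root.

End G.
Import G.

Module H.

Section Mon.
Variable g : seq nat.
Local Notation nu := (size g).
Local Notation G i := (nth 0 g i).
Local Notation valv := (valv g).

Lemma in_monoid_supp (L : seq nat) x : (forall t, t \in L -> t < nu) ->
  in_monoid (map (fun i => G i) L) x <-> exists c, supp g L c /\ x = valv c.
Proof.
elim: L x => [|a L IH] x hL.
  split.
    case=> l ->; exists (fun _ => 0); split=> //; by rewrite big_ord0 valv_zero.
  case=> c [hc ->]; exists (fun _ => 0); rewrite big_ord0.
  by rewrite (valv_ext (v:=fun _ => 0)) ?valv_zero // => i hi; apply: hc.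
have hL' : forall t, t \in L -> t < nu by move=> t tL; apply: hL; rewrite inE tL orbT.
have ha : a < nu by apply: hL; rewrite mem_head.
split.
  case=> l; rewrite /= big_ord_recl /= => ->.
  have [c [hc ec]] := (IH (\sum_(i < size [seq G i | i <- L]) l i.+1 * nth 0 [seq G i | i <- L] i) hL').1
     (ex_intro _ (fun j => l j.+1) (erefl _)).
  exists (fun t => c t + ev a (l 0) t); split.
    move=> t ht; rewrite inE negb_or => /andP[ta tL]; rewrite hc // /ev.
    by rewrite (negPf ta).
  by rewrite valv_add valv_ev // -ec addnC.
case=> c [hc ->].
set c' := fun t => if t == a then 0 else c t.
have hc' : supp g L c'.
  move=> t ht tL; rewrite /c'; case: eqP => // /eqP ta.
  by apply: hc => //; rewrite inE negb_or ta tL.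
have [l hl] := (IH (valv c') hL').2 (ex_intro _ c' (conj hc' (erefl _))).
exists (fun j => if j is j'.+1 then l j' else c a).
rewrite /= big_ord_recl /= -hl.
rewrite -(valv_ev _ ha) addnC -valv_add; apply: valv_ext => t ht.
by rewrite /c' /ev; case: eqP => [->|]; lia.
Qed.

End Mon.

Section Build.
Variable S : nat -> Prop.
Variable g : seq nat.
Variable gam : nat -> nat.
Hypothesis hS : numerical_semigroup S.
Hypothesis hg : min_gens S g.
Hypothesis hgam : forall i, 1 <= i < size g -> is_gamma S g i (gam i).
Hypothesis hAp : forall x, apery S (nth 0 g 0) x <->
      exists lam : nat -> nat,
        (forall i, 1 <= i < size g -> lam i <= gam i) /\
        x = \sum_(1 <= i < size g) lam i * nth 0 g i.

Local Notation nu := (size g).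
Local Notation G i := (nth 0 g i).
Local Notation m := (nth 0 g 0).
Local Notation Ap := (apery S (nth 0 g 0)).
Local Notation valv := (valv g).
Local Notation gam0 := (gam0 gam).
Local Notation inB := (inB g gam).
Local Notation HL := (HL g gam).
Local Notation CL := (CL g gam).
Local Notation Good := (Good g gam).

Let hg0 := hg0 hS hAp.

Lemma build k : k <= nu.-1 -> exists ord : seq nat,
  [/\ size ord = k, uniq (0 :: ord), (forall t, t \in ord -> 1 <= t < nu),
      (forall p, p < k -> Good (0 :: take p ord) (nth 0 ord p) /\ CL (0 :: take p ord))
    & CL (0 :: ord)].
Proof.
elim: k => [|k IH] hk.
  by exists [::]; split=> //; exact: (CL_base hS hAp).
have [ord [hs hu hin hgood hcl]] := IH (ltnW hk).
have hj : exists j, 1 <= j < nu /\ j \notin 0 :: ord.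
  apply: NNPP => hn.
  have sub : {subset iota 1 nu.-1 <= ord}.
    move=> t; rewrite mem_iota => ht; apply: NNPP => /negP tn; apply: hn.
    exists t; split; first by move: ht; clear; lia.
    by rewrite inE negb_or tn andbT; apply/eqP; move: ht; clear; lia.
  have := uniq_leq_size (iota_uniq 1 nu.-1) sub; rewrite size_iota hs.
  move: hk; clear; lia.
have hL : forall t, t \in 0 :: ord -> t < nu.
  by move=> t; rewrite inE => /orP[/eqP ->|/hin]; [exact: hg0 | case/andP].
have [i [hi iL hgi]] := root_step hS hg hgam hAp hcl hL hj.
exists (rcons ord i); split.
- by rewrite size_rcons hs.
- by rewrite -rcons_cons rcons_uniq iL hu.
- by move=> t; rewrite mem_rcons inE => /orP[/eqP ->|/hin].
- move=> p hp; rewrite -cats1.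
  case: (ltnP p k) => hpk.
    rewrite takel_cat; last by rewrite hs ltnW.
    by rewrite nth_cat hs hpk; apply: hgood.
  have -> : p = k by move: hp hpk; clear; lia.
  rewrite takel_cat; last by rewrite hs.
  by rewrite -hs take_size nth_cat ltnn subnn /=; split=> //; rewrite hs.
- by rewrite -rcons_cons; apply: (CL_step hS hAp) => //; rewrite inE negb_or in iL;
    case/andP: iL.
Qed.

End Build.

End H.
Import H.

Module I.

Lemma nth_notin_take (s : seq nat) p : uniq s -> p < size s -> nth 0 s p \notin take p s.
Proof.
move=> hu hp; apply/negP => hin.
have := index_uniq 0 hp hu; set x := nth 0 s p => e.
have e2 : index x s = index x (take p s) by rewrite -{1}[s](cat_take_drop p s) index_cat hin.
by move: hin; rewrite -index_mem -e2 e size_take hp ltnn.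
Qed.

Theorem rect_free S g : numerical_semigroup S -> min_gens S g ->
  gamma_rectangular S g -> free S g.
Proof.
move=> hS hg [gam [hgam hAp]].
have hg0 := hg0 hS hAp.
have [ord [hs hu hin hgood hcl]] := build hS hg hgam hAp (leqnn (size g).-1).
set nu := size g in hs hg0 hin hgood *.
have uo : uniq ord by case/andP: hu.
have ordmem : forall i, 1 <= i < nu -> i \in ord.
  move=> i hi; apply: NNPP => /negP io.
  have : {subset i :: ord <= iota 1 nu.-1}.
    move=> t; rewrite inE mem_iota => /orP[/eqP ->|/hin]; lia.
  move/(uniq_leq_size); rewrite /= io uo size_iota hs => /(_ isT); lia.
have pord : perm_eq ord (iota 1 nu.-1).
  apply: uniq_perm => //; first exact: iota_uniq.
  move=> t; rewrite mem_iota; apply/idP/idP; first by move/hin; lia.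
  by move=> h; apply: ordmem; lia.
set n := [seq nth 0 g i | i <- 0 :: ord].
have sn : size n = nu by rewrite size_map /= hs; lia.
have nthn : forall j, 0 < j < nu -> nth 0 n j = nth 0 g (nth 0 ord j.-1).
  move=> j hj; rewrite (nth_map 0); last by rewrite /= hs; lia.
  by case: j hj => // j _.
have reidx : forall F : nat -> nat,
    \sum_(1 <= j < nu) F (nth 0 ord j.-1) = \sum_(1 <= i < nu) F i.
  move=> F.
  have -> : \sum_(1 <= i < nu) F i = \sum_(i <- ord) F i.
    by rewrite (perm_big _ pord) /index_iota subn1.
  by rewrite [RHS](big_nth 0) big_add1 hs.
exists n; split.
  rewrite -[X in perm_eq _ X](mkseq_nth 0 g) /mkseq; apply: perm_map.
  have -> : iota 0 nu = 0 :: iota 1 nu.-1 by rewrite -{1}(prednK hg0).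
  by rewrite perm_cons.
exists (fun j => gam (nth 0 ord j.-1)); split.
  move=> j; rewrite sn => hj.
  set p := j.-1; set i := nth 0 ord p.
  have hp : p < size ord by rewrite hs /p; lia.
  have iord : i \in ord by apply: mem_nth.
  have hi := hin i iord.
  have hi' : i < nu by case/andP: hi.
  have hp2 : p < nu.-1 by rewrite -hs.
  have [hgd hclp] := hgood p hp2.
  have tk : take j n = [seq nth 0 g t | t <- 0 :: take p ord].
    by rewrite -map_take /p; case: j hj {p hp hp2 i iord hi hi' hgd hclp} => // j _.
  have nj : nth 0 n j = nth 0 g i by rewrite nthn.
  have hL : forall t, t \in 0 :: take p ord -> t < nu.
    move=> t; rewrite inE => /orP[/eqP ->//|/mem_take /hin]; lia.
  rewrite /is_phi tk nj; split.
    apply/(in_monoid_supp _ hL).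
    case: hgd => a [k [[kb ks] ek]].
    exists (fun t => k t + ev 0 a t); split.
      move=> t ht; rewrite inE negb_or => /andP[t0 tT]; rewrite ks ?inE ?negb_or ?t0 // /ev.
      by rewrite (negPf t0).
    by rewrite valv_add valv_ev // addnC.
  move=> h h0 /(in_monoid_supp _ hL) [c [hc ec]].
  case: (leqP (gam i).+1 h) => // hlt; exfalso.
  have [k [[kb ks] ek]] := hclp c hc.
  have i0 : i != 0 by apply/eqP => e; rewrite e in hi; lia.
  have eb : inB g gam (ev i h).
    move=> t ht; rewrite /ev /C.gam0; case: eqP => [->|]; last by case: eqP.
    by rewrite (negPf i0); lia.
  have := box_inj_mod hS hg hgam hAp eb kb; rewrite valv_ev // ec => /(_ ek i hi').
  rewrite ks //; first by rewrite /ev eqxx; lia.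
  rewrite inE negb_or i0 /=; exact: nth_notin_take.
move=> x; rewrite sn /=.
split.
  case/hAp=> lam' [hb ->].
  exists (fun j => lam' (nth 0 ord j.-1)); split.
    move=> j hj; apply: hb; apply: hin; apply: mem_nth; rewrite hs; lia.
  rewrite -(reidx (fun i => lam' i * nth 0 g i)).
  by apply: eq_big_nat => j hj; rewrite nthn.
case=> lam [hb ->]; apply/hAp.
exists (fun i => lam (index i ord).+1); split.
  move=> i hi; have io := ordmem i hi.
  have := hb (index i ord).+1; rewrite /= nth_index // => -> //.
  by rewrite -index_mem in io; move: io hi hs; rewrite /nu -subn1; move: (index i ord) (size ord) (size g) (i : nat) => a b c d; lia.
rewrite -(reidx (fun i => lam (index i ord).+1 * nth 0 g i)).
apply: eq_big_nat => j hj; rewrite nthn // index_uniq //.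
  by case: j hj.
rewrite hs; lia.
Qed.

End I.
Import I.


Lemma gam_ge1 S g gam : numerical_semigroup S -> min_gens S g ->
  (forall i, 1 <= i < size g -> is_gamma S g i (gam i)) ->
  (forall x, apery S (nth 0 g 0) x <->
      exists lam : nat -> nat,
        (forall i, 1 <= i < size g -> lam i <= gam i) /\
        x = \sum_(1 <= i < size g) lam i * nth 0 g i) ->
  forall j, 1 <= j < size g -> 1 <= gam j.
Proof.
move=> hS hg hgam hAp j hj.
have [v [vb ev_]] := ap_box hS hAp (gen_ap hS hg hAp hj).
have hj' : j < size g by case/andP: hj.
have := vb j hj'; rewrite (mingen_rep hS hg hAp hj' (esym ev_) hj') /ev eqxx /C.gam0.
by case: eqP => // e; move: hj; rewrite e.
Qed.

Lemma S569_ns : numerical_semigroup S569.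
Proof.
split.
- by exists 0, 0, 0.
- move=> x y [a [b [c ->]]] [a' [b' [c' ->]]]; exists (a + a'), (b + b'), (c + c'); lia.
- exists 14 => n; elim/ltn_ind: n => n IH hn.
  case: (ltnP n 19) => h.
    have : n \in [:: 14; 15; 16; 17; 18] by rewrite !inE; lia.
    rewrite !inE => /orP[/eqP->|/orP[/eqP->|/orP[/eqP->|/orP[/eqP->|/eqP->]]]].
    + by exists 1, 0, 1.
    + by exists 3, 0, 0.
    + by exists 2, 1, 0.
    + by exists 1, 2, 0.
    + by exists 0, 3, 0.
  have [a [b [c e]]] := IH (n - 5) ltac:(lia) ltac:(lia).
  by exists a.+1, b, c; lia.
Qed.

Lemma S569_mg : min_gens S569 [:: 5; 6; 9].
Proof.
split=> // x; split.
  rewrite !inE => /orP[/eqP->|/orP[/eqP->|/eqP->]]; split=> //.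
  - by exists 1, 0, 0.
  - by move=> [a [b [[a1 [a2 [a3 ->]]] [b1 [b2 [b3 ->]]] ? ? ?]]]; lia.
  - by exists 0, 1, 0.
  - by move=> [a [b [[a1 [a2 [a3 ->]]] [b1 [b2 [b3 ->]]] ? ? ?]]]; lia.
  - by exists 0, 0, 1.
  - by move=> [a [b [[a1 [a2 [a3 ->]]] [b1 [b2 [b3 ->]]] ? ? ?]]]; lia.
case=> [[a [b [c e]]] x0 nd]; rewrite !inE.
case: (posnP a) => ha.
  case: (posnP b) => hb.
    case: (posnP c) => hc; first by lia.
    case: (eqVneq x 9) => [->|nx]; first by [].
    exfalso; apply: nd; exists 9, (x - 9); split; [by exists 0,0,1 | | by [] | lia | lia].
    by exists 0, 0, c.-1; lia.
  case: (eqVneq x 6) => [->|nx]; first by [].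
  exfalso; apply: nd; exists 6, (x - 6); split; [by exists 0,1,0 | | by [] | lia | lia].
  by exists 0, b.-1, c; lia.
case: (eqVneq x 5) => [->|nx]; first by [].
exfalso; apply: nd; exists 5, (x - 5); split; [by exists 1,0,0 | | by [] | lia | lia].
by exists a.-1, b, c; lia.
Qed.

Lemma S569_free : free S569 [:: 5; 6; 9].
Proof.
exists [:: 6; 9; 5]; split; first by [].
exists (fun j => if j == 1 then 1 else 2); split.
  move=> i /andP[h1 h2]; rewrite /= in h2; have : i \in [:: 1; 2] by rewrite !inE; lia.
  rewrite !inE => /orP[/eqP->|/eqP->]; split.
  - by exists (fun _ => 3); rewrite big_ord_recl big_ord0.
  - move=> h h0 [l]; rewrite big_ord_recl big_ord0 /= => e; lia.
  - by exists (fun _ => 1); rewrite !big_ord_recl big_ord0.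
  - move=> h h0 [l]; rewrite !big_ord_recl big_ord0 /= => e; lia.
move=> x; split.
  case=> [[a [b [c e]]] hx]; rewrite /= in hx.
  have hb : b = 0.
    case: (posnP b) => // hb; exfalso; case: hx => [|]; first lia.
    by apply; exists a, b.-1, c; lia.
  have hc : c <= 1.
    case: (leqP c 1) => // hc; exfalso; case: hx => [|]; first lia.
    by apply; exists a, (b + 2), (c - 2); lia.
  have ha : a <= 2.
    case: (leqP a 2) => // ha; exfalso; case: hx => [|]; first lia.
    by apply; exists (a - 3), b, (c + 1); lia.
  exists (fun j => if j == 1 then c else a); split; last by rewrite big_ltn // big_ltn // big_geq //=; lia.
  move=> i /andP[h1 h2]; rewrite /= in h2; have : i \in [:: 1; 2] by rewrite !inE; lia.
  by rewrite !inE => /orP[/eqP->|/eqP->].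
case=> lam [hl ->]; rewrite big_ltn // big_ltn // big_geq //=.
have h1 := hl 1 isT; have h2 := hl 2 isT; rewrite /= in h1 h2.
split; first by exists (lam 2), 0, (lam 1); lia.
case: (ltnP (lam 1 * 9 + (lam 2 * 5 + 0)) 6) => hx; first by left.
right; case=> a [b [c e]]; lia.
Qed.

Lemma S569_notrect : ~ gamma_rectangular S569 [:: 5; 6; 9].
Proof.
case=> gam [hgam hAp].
have g1 := gam_ge1 S569_ns S569_mg hgam hAp (j:=1) isT.
have g2 := gam_ge1 S569_ns S569_mg hgam hAp (j:=2) isT.
have : apery S569 5 15.
  apply/hAp; exists (fun _ => 1); split.
    move=> i /andP[h1 h2]; rewrite /= in h2; have : i \in [:: 1; 2] by rewrite !inE; lia.
    by rewrite !inE => /orP[/eqP->|/eqP->].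
  by rewrite big_ltn // big_ltn // big_geq.
case=> _ [//|]; apply; by exists 2, 0, 0.
Qed.

Theorem mainTheorem8 :
  (forall (S : nat -> Prop) (g : seq nat),
      numerical_semigroup S -> min_gens S g ->
      gamma_rectangular S g -> free S g) /\
  [/\ numerical_semigroup S569, min_gens S569 [:: 5; 6; 9],
      free S569 [:: 5; 6; 9] & ~ gamma_rectangular S569 [:: 5; 6; 9]].
Proof.
split; first exact: rect_free.
split; [exact: S569_ns | exact: S569_mg | exact: S569_free | exact: S569_notrect].
Qed.
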